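(* Let $(\mathfrak{A},\mathfrak{A}_0)$ be a CQ*-algebra as in the context, and let $\mathfrak{A}_1$ be the completion of $\mathfrak{A}_0$ with respect to the inductive limit topology $\tau_{ind}$. Then $$\mathfrak{A}_0=\bigcup_{N\in\mathbb{N}}\mathfrak{A}_0(N)\subset\mathfrak{A}_1=\bigcup_{N\in\mathbb{N}}\overline{\mathfrak{A}_0(N)}[d_N]\subset\mathfrak{A},$$ where $\overline{\mathfrak{A}_0(N)}[d_N]$ is the completion of the metric space $(\mathfrak{A}_0(N),d_N)$ (realized as the $\|\cdot\|$-closure of $\mathfrak{A}_0(N)$ in $\mathfrak{A}$), and $\mathfrak{A}_1$, equipped with the norm $\|\cdot\|$, is a locally convex $*$-algebra: for $X,Y\in\mathfrak{A}_1$ and sequences $\{A_n\},\{B_n\}\subset\mathfrak{A}_0(N)$ (some $N$) with $\|A_n-X\|\to0$, $\|B_n-Y\|\to0$, the limit $XY:=\|\cdot\|\text{-}\lim_n A_nB_n$ exists in $\mathfrak{A}_1$ and is independent of the chosen sequences, this multiplication extends that of $\mathfrak{A}_0$, is separately $\|\cdot\|$-continuous, and $\|X^*\|=\|X\|$.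
   Context: Let $\mathfrak{A}_0$ be a unital C*-algebra with C*-norm $\|\cdot\|_0$, and $\|\cdot\|$ another norm on $\mathfrak{A}_0$ with $\|A\|\le\|A\|_0$, $\|AB\|\le\|A\|\,\|B\|_0$, $\|A^*\|=\|A\|$. $\mathfrak{A}$ is the Banach space completion of $(\mathfrak{A}_0,\|\cdot\|)$, with involution $X^*:=\lim A_n^*$ for $A_n\in\mathfrak{A}_0$, $\|A_n-X\|\to0$. For $N\in\mathbb{N}$ let $\mathfrak{A}_0(N)=\{A\in\mathfrak{A}_0:\|A\|_0\le N\}$ with metric $d_N(A,B)=\|A-B\|$. The inductive limit topology $\tau_{ind}$ on $\mathfrak{A}_0$ is defined by: $\tau_{ind}$-$\lim A_n=A$ iff $\{A_n\}\subset\mathfrak{A}_0(N)$ for some $N$ and $\|A_n-A\|\to0$. *)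

(* Defs.v *)
From HB Require Import structures.
From mathcomp Require Import all_boot all_order all_algebra.
From mathcomp Require Import complex.
From mathcomp Require Import all_classical all_reals all_analysis.
Import Order.TTheory GRing.Theory Num.Theory.
Local Open Scope ring_scope.
Local Open Scope classical_set_scope.
Local Open Scope complex_scope.

Set Implicit Arguments.
Unset Strict Implicit.
Unset Printing Implicit Defensive.

Record is_unital_Cstar_algebra (R : realType) (A0 : lalgType R[i])
    (st : A0 -> A0) (n0 : A0 -> R) : Prop := {
  cs_st_invol : forall a, st (st a) = a;
  cs_st_add : forall a b, st (a + b) = st a + st b;
  cs_st_scale : forall (c : R[i]) a, st (c *: a) = c^* *: st a;
  cs_st_mul : forall a b, st (a * b) = st b * st a;
  cs_n0_ge0 : forall a, 0 <= n0 a;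
  cs_n0_eq0 : forall a, n0 a = 0 -> a = 0;
  cs_n0_add : forall a b, n0 (a + b) <= n0 a + n0 b;
  cs_n0_scale : forall (c : R[i]) a, (n0 (c *: a))%:C = `|c| * (n0 a)%:C;
  cs_n0_mul : forall a b, n0 (a * b) <= n0 a * n0 b;
  cs_n0_Cstar : forall a, n0 (st a * a) = n0 a ^+ 2;
  cs_n0_complete : forall u : nat -> A0,
    (forall e : R, 0 < e -> exists M : nat,
        forall p q : nat, (M <= p)%N -> (M <= q)%N -> n0 (u p - u q) < e) ->
    exists a : A0, forall e : R, 0 < e -> exists M : nat,
        forall p : nat, (M <= p)%N -> n0 (u p - a) < e
}.

(** The second norm ||.|| on A0 is realized as a ||a|| := `|j a|, where
    j : A0 -> A is a linear injective map into a Banach space A with dense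
    range: (A, j) is the Banach space completion of (A0, ||.||).
    The hypotheses ||a|| <= ||a||_0, ||ab|| <= ||a|| ||b||_0, ||a^star|| = ||a||
    are imposed, and stA : A -> A is the extension of the involution to A,
    i.e. the (unique) continuous map with stA (j a) = j (st a)
    (X^star = lim A_n^star). *)
Record is_CQstar_completion (R : realType) (A0 : lalgType R[i])
    (st : A0 -> A0) (n0 : A0 -> R) (A : completeNormedModType R[i])
    (j : A0 -> A) (stA : A -> A) : Prop := {
  cq_j_add : forall a b, j (a + b) = j a + j b;
  cq_j_scale : forall (c : R[i]) a, j (c *: a) = c *: j a;
  cq_j_inj : injective j;
  cq_j_dense : closure (range j) = setT;
  cq_n_le_n0 : forall a, `|j a| <= (n0 a)%:C;
  cq_n_mul : forall a b, `|j (a * b)| <= `|j a| * (n0 b)%:C;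
  cq_n_st : forall a, `|j (st a)| = `|j a|;
  cq_stA_ext : forall a, stA (j a) = j (st a);
  cq_stA_cont : continuous stA
}.

Definition A0N (R : realType) (A0 : lalgType R[i]) (n0 : A0 -> R) (N : nat)
  : set A0 := [set a | n0 a <= N%:R].

Definition boundedN (R : realType) (A0 : lalgType R[i]) (n0 : A0 -> R)
  (N : nat) (u : nat -> A0) : Prop := forall k, A0N n0 N (u k).

(** The completion A1 of (A0, tau_ind), realized inside A: the set of
    ||.||-limits in A of tau_ind-Cauchy sequences, i.e. sequences lying in
    some A0(N) that are Cauchy for ||.||. *)
Definition tau_ind_completion (R : realType) (A0 : lalgType R[i])
  (n0 : A0 -> R) (A : completeNormedModType R[i]) (j : A0 -> A) : set A :=
  [set X | exists (N : nat) (u : nat -> A0), boundedN n0 N u /\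
     cauchy ((j \o u) @ \oo) /\ (j \o u) @ \oo --> X].

Definition is_product (R : realType) (A0 : lalgType R[i]) (n0 : A0 -> R)
  (A : completeNormedModType R[i]) (j : A0 -> A) (X Y Z : A) : Prop :=
  exists (N : nat) (u v : nat -> A0), boundedN n0 N u /\ boundedN n0 N v /\
    (j \o u) @ \oo --> X /\ (j \o v) @ \oo --> Y /\
    (fun k => j (u k * v k)) @ \oo --> Z.

Definition A1mul (R : realType) (A0 : lalgType R[i]) (n0 : A0 -> R)
  (A : completeNormedModType R[i]) (j : A0 -> A) (X Y : A) : A :=
  xget 0 [set Z | is_product n0 j X Y Z].

(* Main.v *)
Require Import Defs.
From HB Require Import structures.
From mathcomp Require Import all_boot all_order all_algebra.
From mathcomp Require Import complex.
From mathcomp Require Import all_classical all_reals all_analysis.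
Import Order.TTheory GRing.Theory Num.Theory.
Local Open Scope ring_scope.
Local Open Scope classical_set_scope.
Local Open Scope complex_scope.

Section Tools.
Variables (R : realType) (V : normedModType R[i]).

Lemma cvg_dom {T} {F : set_system T} {FF : Filter F} (g : T -> V) (l : V) (h : T -> R[i]^o) :
  h @ F --> (0:R[i]^o) -> (\forall t \near F, `|g t - l| <= `|h t|) -> g @ F --> l.
Proof.
move=> /cvgr0Pnorm_lt h0 hb; apply/cvgrPdist_lt => e e0.
near=> t; rewrite distrC.
have H1 : `|g t - l| <= `|h t| by near: t.
have H2 : `|h t| < e by near: t; exact: h0.
exact: le_lt_trans H1 H2.
Unshelve. all: end_near. Qed.

Lemma cvg_sub0 {T} {F : set_system T} {FF : Filter F} (f : T -> V) x :
  f @ F --> x -> (fun t => `|f t - x|) @ F --> (0:R[i]^o).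
Proof.
move=> fx; have : (fun t => f t - x) @ F --> x - x.
  by apply: cvgB => //; exact: cvg_cst.
by rewrite subrr => /cvg_norm; rewrite normr0.
Qed.

Lemma cvg_fst_oo (f : nat -> V) (l : V) : f @ \oo --> l ->
  (fun pq : nat * nat => f pq.1) @ (\oo, \oo) --> l.
Proof.
move=> fl P /fl Pl.
exists ([set n | P (f n)], setT); first by split => //; exact: filterT.
by move=> [p q] [/= hp _].
Qed.

Lemma cvg_snd_oo (f : nat -> V) (l : V) : f @ \oo --> l ->
  (fun pq : nat * nat => f pq.2) @ (\oo, \oo) --> l.
Proof.
move=> fl P /fl Pl.
exists (setT, [set n | P (f n)]); first by split => //; exact: filterT.
by move=> [p q] [/= _ hp].
Qed.

Lemma cauchy_goal (g : nat -> V) (e : R[i]) :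
  (\forall pq \near (\oo, \oo), `|g pq.1 - g pq.2| < e) ->
  \forall x & y \near g @ \oo, ball x e y.
Proof.
move=> [[P Q] /= [hP hQ] hPQ].
exists (g @` P, g @` Q) => /=.
  split; [apply: filterS hP|apply: filterS hQ] => n Pn /=; by exists n.
move=> [x y] /= [[p Pp <-] [q Qq <-]].
rewrite -ball_normE /ball_ /=.
exact: (hPQ (p, q)).
Qed.

End Tools.

Section Tools2.
Variables (R : realType) (V : completeNormedModType R[i]).

Lemma lim_le (a : nat -> V) (b : nat -> R[i]^o) (la : V) (lb : R[i]^o) :
  a @ \oo --> la -> b @ \oo --> lb -> 0 <= lb ->
  (forall k, `|a k| <= b k) -> `|la| <= lb.
Proof.
move=> ha hb lb0 hab; apply/ler_addgt0Pr => e e0.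
near \oo => k.
have H1 : `|la - a k| < e / 2.
  by near: k; apply: ((cvgrPdist_lt a la).1 ha); rewrite divr_gt0.
have H2 : `|lb - b k| < e / 2.
  by near: k; apply: ((cvgrPdist_lt b lb).1 hb); rewrite divr_gt0.
have bk0 : 0 <= b k by apply: le_trans (hab k).
have H3 : `|la| <= `|la - a k| + `|a k|.
  by rewrite -{1}(subrK (a k) la) ler_normD.
have H4 : b k <= lb + `|lb - b k|.
  rewrite distrC -lerBlDl; apply: real_ler_norm.
  by rewrite realB // ger0_real.
apply: (le_trans H3); apply: (le_trans (lerD (lexx _) (hab k))).
apply: (le_trans (lerD (lexx _) H4)).
rewrite addrA [lb + e]addrC -addrA (addrC lb) addrA; apply: lerD; last exact: lexx.
rewrite [e]splitr; apply: lerD; exact: ltW.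
Unshelve. all: end_near. Qed.

Lemma cauchy_dom (g f1 f2 : nat -> V) (l1 l2 : V) (c : R[i]) :
  f1 @ \oo --> l1 -> f2 @ \oo --> l2 -> 0 <= c ->
  (forall p q, `|g p - g q| <= c * (`|f1 p - f1 q| + `|f2 p - f2 q|)) ->
  exists Z : V, g @ \oo --> Z.
Proof.
move=> h1 h2 c0 hb; apply/cvg_ex; apply: cauchy_cvg.
apply/cauchy_ballP => e e0; apply: cauchy_goal.
have Hh : (fun pq : nat * nat => (`|c *: (f1 pq.1 - f1 pq.2)| + `|c *: (f2 pq.1 - f2 pq.2)| : R[i]^o)) @ (\oo, \oo) --> (0 : R[i]^o).
  have -> : (0 : R[i]^o) = `|c *: (l1 - l1)| + `|c *: (l2 - l2)|.
    by rewrite !subrr scaler0 normr0 addr0.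
  apply: cvgD; apply: cvg_norm; apply: cvgZl_tmp; apply: cvgB.
  - exact: cvg_fst_oo.
  - exact: cvg_snd_oo.
  - exact: cvg_fst_oo.
  - exact: cvg_snd_oo.
have H : (fun pq : nat * nat => g pq.1 - g pq.2) @ (\oo, \oo) --> (0:V).
  apply: (@cvg_dom R V (nat * nat) _ (filter_prod_filter _ _) (fun pq => g pq.1 - g pq.2) 0 _ Hh).
  apply: filterE => pq; rewrite subr0 ger0_norm; last by rewrite addr_ge0.
  by rewrite !normrZ (ger0_norm c0) -mulrDr; exact: hb.
exact: ((cvgr0Pnorm_lt _).1 H e e0).
Unshelve. all: end_near. Qed.

End Tools2.
Arguments lim_le {R V a b la lb}.

Section Tools3.
Variables (R : realType) (V : normedModType R[i]).

Lemma lim_uniq (f : nat -> V) (a b : V) : f @ \oo --> a -> f @ \oo --> b -> a = b.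
Proof. by move=> ha hb; apply: (cvg_unique _ ha hb). Qed.

Lemma within_cont (f : V -> V) (S : set V) (c : R[i]) :
  (forall Y Y', S Y -> S Y' -> `|f Y' - f Y| <= `|c *: (Y' - Y)|) ->
  {within S, continuous f}.
Proof.
move=> hb; apply/subspace_continuousP => Y hY.
have Hh : (fun Y' => (`|c *: (Y' - Y)| : R[i]^o)) @ within S (nbhs Y) --> (0 : R[i]^o).
  apply: cvg_trans (cvg_app _ (cvg_within _)) _.
  have -> : (0 : R[i]^o) = `|c *: (Y - Y)| by rewrite subrr scaler0 normr0.
  apply: cvg_norm; apply: cvgZl_tmp; apply: cvgB; [exact: cvg_id| exact: cvg_cst].
apply: (@cvg_dom R V V (within S (nbhs Y)) (within_filter _ _) f (f Y) _ Hh).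
apply: filterS (withinT _ _) => Y' hY'.
by rewrite ger0_norm // hb.
Qed.

End Tools3.

Lemma cvg_eqf {R : realType} {V : normedModType R[i]} (f g : nat -> V) (l : V) :
  (forall k, f k = g k) -> f @ \oo --> l -> g @ \oo --> l.
Proof. by move=> e; have -> : g = f by apply: funext => k; rewrite e. Qed.

Arguments within_cont {R V f S} c.
Arguments lim_uniq {R V f a b}.
Arguments cvg_eqf {R V f g l}.

Section Prop61.
Variables (R : realType) (A0 : lalgType R[i]) (st : A0 -> A0)
  (n0 : A0 -> R) (A : completeNormedModType R[i]) (j : A0 -> A)
  (stA : A -> A).
Hypothesis HC : is_unital_Cstar_algebra st n0.
Hypothesis HQ : is_CQstar_completion st n0 j stA.

Lemma j0 : j 0 = 0.
Proof.
have := cq_j_add HQ 0 0; rewrite addr0 => h.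
by apply: (@addrI _ (j 0)); rewrite addr0 -h.
Qed.

Lemma jN a : j (- a) = - j a.
Proof.
have := cq_j_add HQ a (- a); rewrite subrr j0 => h.
by apply: (@addrI _ (j a)); rewrite -h subrr.
Qed.

Lemma jB a b : j (a - b) = j a - j b.
Proof. by rewrite (cq_j_add HQ) jN. Qed.

Lemma n0st a : n0 (st a) <= n0 a.
Proof.
have h1 := cs_n0_ge0 HC (st a); have h2 := cs_n0_ge0 HC a.
have := cs_n0_Cstar HC (st a); rewrite (cs_st_invol HC).
have := cs_n0_mul HC a (st a) => h3 h4.
rewrite h4 in h3.
have [->|hpos] := eqVneq (n0 (st a)) 0; first by [].
have hp : 0 < n0 (st a) by rewrite lt_def hpos h1.
rewrite expr2 in h3.
by rewrite -(ler_pM2r hp).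
Qed.

Lemma nmull a b : `|j (a * b)| <= (n0 a)%:C * `|j b|.
Proof.
rewrite -(cq_n_st HQ) (cs_st_mul HC).
apply: (le_trans (cq_n_mul HQ _ _)).
rewrite (cq_n_st HQ) mulrC ler_wpM2r //.
by rewrite lecR n0st.
Qed.

Lemma n0C a : 0 <= (n0 a)%:C.
Proof. by rewrite lecR (cs_n0_ge0 HC). Qed.

Lemma archiC (e : R[i]) : 0 < e -> exists n : nat, e < n%:R.
Proof.
move=> e0.
have er : e \is Num.real by apply: gtr0_real.
rewrite -(RRe_real er).
exists (Num.truncn (complex.Re e)).+1.
by rewrite -(rmorph_nat (real_complex R)) ltcR truncnS_gt.
Qed.



Local Notation A1 := (tau_ind_completion n0 j).
Local Notation mul := (A1mul n0 j).

Lemma n0C_le a (N : nat) : n0 a <= N%:R -> (n0 a)%:C <= N%:R.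
Proof. by move=> h; rewrite -(rmorph_nat (real_complex R)) lecR. Qed.

Lemma bnd_mono {N M u} : boundedN n0 N u -> (N <= M)%N -> boundedN n0 M u.
Proof. by move=> h le k; apply: le_trans (h k) _; rewrite ler_nat. Qed.

Lemma bnd_cst a : exists N, boundedN n0 N (fun=> a).
Proof.
exists (Num.truncn (n0 a)).+1 => k; rewrite /A0N /=.
exact: ltW (truncnS_gt _).
Qed.

Lemma bnd_mul {N u v} : boundedN n0 N u -> boundedN n0 N v ->
  boundedN n0 (N * N) (fun k => u k * v k).
Proof.
move=> hu hv k; rewrite /A0N /= natrM.
apply: le_trans (cs_n0_mul HC _ _) _.
by apply: ler_pM; rewrite ?(cs_n0_ge0 HC) //; [exact: hu|exact: hv].
Qed.

Lemma bnd_add {N u v} : boundedN n0 N u -> boundedN n0 N v ->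
  boundedN n0 (N + N) (fun k => u k + v k).
Proof.
move=> hu hv k; rewrite /A0N /= natrD.
apply: le_trans (cs_n0_add HC _ _) _.
by apply: lerD; [exact: hu|exact: hv].
Qed.

Lemma bnd_st {N u} : boundedN n0 N u -> boundedN n0 N (fun k => st (u k)).
Proof. by move=> hu k; apply: le_trans (n0st _) (hu k). Qed.

Lemma mem_A1 {N u} {X : A} : boundedN n0 N u -> (j \o u) @ \oo --> X -> X \in A1.
Proof.
move=> hu hX; rewrite in_setE; exists N, u; split => //; split => //.
by apply: cvg_cauchy; apply/cvg_ex; exists X.
Qed.

Lemma A1_rep {X : A} : X \in A1 -> exists N u, boundedN n0 N u /\ (j \o u) @ \oo --> X.
Proof. by rewrite in_setE => -[N [u [hu [_ hX]]]]; exists N, u. Qed.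

Lemma prod_est N a b a' b' : n0 b <= N%:R -> n0 a' <= N%:R ->
  `|j (a * b) - j (a' * b')| <= N%:R * (`|j a - j a'| + `|j b - j b'|).
Proof.
move=> hb ha'; rewrite -jB.
have -> : a * b - a' * b' = (a - a') * b + a' * (b - b').
  by rewrite mulrBl mulrBr addrA subrK.
rewrite (cq_j_add HQ) [N%:R * _]mulrDr.
apply: le_trans (ler_normD _ _) _; apply: lerD.
  apply: le_trans (cq_n_mul HQ _ _) _; rewrite jB mulrC.
  by apply: ler_wpM2r => //; apply: n0C_le.
apply: le_trans (nmull _ _) _; rewrite jB.
by apply: ler_wpM2r => //; apply: n0C_le.
Qed.

Lemma prod_ex {N u v} {X Y : A} : boundedN n0 N u -> boundedN n0 N v ->
  (j \o u) @ \oo --> X -> (j \o v) @ \oo --> Y ->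
  exists Z : A, (fun k => j (u k * v k)) @ \oo --> Z.
Proof.
move=> hu hv hX hY.
apply: (@cauchy_dom R A _ _ _ X Y N%:R hX hY) => // p q.
exact: prod_est (hv p) (hu q).
Qed.

Lemma prod_uniq (X Y Z Z' : A) : is_product n0 j X Y Z -> is_product n0 j X Y Z' -> Z = Z'.
Proof.
move=> [N [u [v [hu [hv [hX [hY hZ]]]]]]] [N' [u' [v' [hu' [hv' [hX' [hY' hZ']]]]]]].
pose M := maxn N N'.
have hm1 : (N <= M)%N by rewrite leq_maxl.
have hm2 : (N' <= M)%N by rewrite leq_maxr.
have Hh : (fun k => (`|M%:R *: (j (u k) - j (u' k))| + `|M%:R *: (j (v k) - j (v' k))| : R[i]^o)) @ \oo --> (0 : R[i]^o).
  have -> : (0 : R[i]^o) = `|M%:R *: (X - X)| + `|M%:R *: (Y - Y)|.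
    by rewrite !subrr scaler0 normr0 addr0.
  by apply: cvgD; apply: cvg_norm; apply: cvgZl_tmp; apply: cvgB.
have H0 : (fun k => j (u k * v k) - j (u' k * v' k)) @ \oo --> (0 : A).
  apply: (@cvg_dom R A nat _ _ (fun k => j (u k * v k) - j (u' k * v' k)) 0 _ Hh); apply: filterE => k.
  rewrite subr0 ger0_norm; last by rewrite addr_ge0.
  rewrite !normrZ (ger0_norm (ler0n _ _)) -mulrDr.
  apply: prod_est.
    by have := bnd_mono hv hm1 k; rewrite /A0N /=.
  by have := bnd_mono hu' hm2 k; rewrite /A0N /=.
have H1 : (fun k => j (u k * v k) - j (u' k * v' k)) @ \oo --> Z - Z'.
  exact: cvgB.
by apply/eqP; rewrite -subr_eq0; apply/eqP; apply: lim_uniq H1 H0.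
Qed.

Lemma mul_eq {N u v} {X Y Z : A} : boundedN n0 N u -> boundedN n0 N v ->
  (j \o u) @ \oo --> X -> (j \o v) @ \oo --> Y ->
  (fun k => j (u k * v k)) @ \oo --> Z -> mul X Y = Z.
Proof.
move=> hu hv hX hY hZ.
have hP : is_product n0 j X Y Z by exists N, u, v.
apply: xget_unique => // W hW; exact: prod_uniq hW hP.
Qed.

Lemma mul_cvg {N u v} {X Y : A} : boundedN n0 N u -> boundedN n0 N v ->
  (j \o u) @ \oo --> X -> (j \o v) @ \oo --> Y ->
  (fun k => j (u k * v k)) @ \oo --> mul X Y.
Proof.
move=> hu hv hX hY; have [Z hZ] := prod_ex hu hv hX hY.
by rewrite (mul_eq hu hv hX hY hZ).
Qed.

Lemma stA_cvg {u} {X : A} : (j \o u) @ \oo --> X ->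
  (fun k => j (st (u k))) @ \oo --> stA X.
Proof.
move=> hX.
have -> : (fun k => j (st (u k))) = stA \o (j \o u).
  by apply: funext => k /=; rewrite (cq_stA_ext HQ).
exact: (continuous_cvg _ (@cq_stA_cont _ _ _ _ _ _ _ HQ X) hX).
Qed.



Lemma A1_rep2 {X Y : A} : X \in A1 -> Y \in A1 -> exists N u v,
  [/\ boundedN n0 N u, boundedN n0 N v, (j \o u) @ \oo --> X & (j \o v) @ \oo --> Y].
Proof.
move=> /A1_rep [N1 [u [hu hX]]] /A1_rep [N2 [v [hv hY]]].
exists (maxn N1 N2), u, v; split => //.
  by apply: bnd_mono hu _; rewrite leq_maxl.
by apply: bnd_mono hv _; rewrite leq_maxr.
Qed.

Lemma st_scale_r (c : R[i]) (a b : A0) : a * (c *: b) = c *: (a * b).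
Proof.
rewrite -[LHS](cs_st_invol HC) (cs_st_mul HC) (cs_st_scale HC).
have -> : (c^* *: st b) * st a = c^* *: (st b * st a) by rewrite scalerAl.
rewrite -(cs_st_mul HC) (cs_st_scale HC) (cs_st_invol HC).
by rewrite ?conjCK ?conjcK // (conjcK c).
Qed.

Lemma scale_bound (c : R[i]) : exists K : nat, forall a, n0 (c *: a) <= K%:R * n0 a.
Proof.
have [K hK] : exists K : nat, `|c| + 1 < K%:R.
  by apply: archiC; rewrite ltr_wpDl.
exists K => a.
have hc : `|c| <= K%:R by apply: le_trans (ltW hK); rewrite lerDl.
rewrite -lecR (cs_n0_scale HC) rmorphM /= (rmorph_nat (real_complex R)).
by apply: ler_wpM2r => //; exact: n0C.
Qed.

Lemma bnd_scale (c : R[i]) : exists K : nat, forall N u, boundedN n0 N u ->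
  boundedN n0 (K * N) (fun k => c *: u k).
Proof.
have [K hK] := scale_bound c; exists K => N u hu k; rewrite /A0N /= natrM.
apply: le_trans (hK _) _; apply: ler_wpM2l => //.
exact: hu.
Qed.

Lemma jZ_cvg (c : R[i]) {u} {X : A} : (j \o u) @ \oo --> X ->
  (j \o (fun k => c *: u k)) @ \oo --> c *: X.
Proof.
move=> hX; have -> : j \o (fun k => c *: u k) = (fun k => c *: (j \o u) k).
  by apply: funext => k /=; rewrite (cq_j_scale HQ).
exact: cvgZl_tmp.
Qed.

Lemma jD_cvg {u v} {X Y : A} : (j \o u) @ \oo --> X -> (j \o v) @ \oo --> Y ->
  (j \o (fun k => u k + v k)) @ \oo --> X + Y.
Proof.
move=> hX hY; have -> : j \o (fun k => u k + v k) = (fun k => (j \o u) k + (j \o v) k).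
  by apply: funext => k /=; rewrite (cq_j_add HQ).
exact: cvgD.
Qed.

Lemma mulX_lip {X : A} {N u} : boundedN n0 N u -> (j \o u) @ \oo --> X ->
  forall Y Y', Y \in A1 -> Y' \in A1 ->
  `|mul X Y' - mul X Y| <= `|N%:R *: (Y' - Y)| /\
  `|mul Y' X - mul Y X| <= `|N%:R *: (Y' - Y)|.
Proof.
move=> hu hX Y Y' hY hY'.
have [M [v [v' [hv hv' hvY hvY']]]] := A1_rep2 hY hY'.
pose P := maxn N M.
have hu' : boundedN n0 P u by apply: bnd_mono hu _; rewrite leq_maxl.
have hv1 : boundedN n0 P v by apply: bnd_mono hv _; rewrite leq_maxr.
have hv1' : boundedN n0 P v' by apply: bnd_mono hv' _; rewrite leq_maxr.
have Hb : (fun k => (`|N%:R *: (j (v' k) - j (v k))| : R[i]^o)) @ \oo --> (`|N%:R *: (Y' - Y)| : R[i]^o).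
  by apply: cvg_norm; apply: cvgZl_tmp; apply: cvgB.
split.
  apply: (lim_le (cvgB (mul_cvg hu' hv1' hX hvY') (mul_cvg hu' hv1 hX hvY)) Hb) => // k.
  rewrite -[X in `|X| <= _]/(j (u k * v' k) - j (u k * v k)).
  rewrite -jB -mulrBr; apply: le_trans (nmull _ _) _.
  rewrite jB normrZ (ger0_norm (ler0n _ _)); apply: ler_wpM2r => //.
  exact: n0C_le (hu k).
apply: (lim_le (cvgB (mul_cvg hv1' hu' hvY' hX) (mul_cvg hv1 hu' hvY hX)) Hb) => // k.
rewrite -[X in `|X| <= _]/(j (v' k * u k) - j (v k * u k)).
rewrite -jB -mulrBl; apply: le_trans (cq_n_mul HQ _ _) _.
rewrite jB normrZ (ger0_norm (ler0n _ _)) mulrC; apply: ler_wpM2r => //.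
exact: n0C_le (hu k).
Qed.



Lemma main :
  (setT = \bigcup_(N in [set: nat]) A0N n0 N) /\
  (j @` setT `<=` A1) /\
  (A1 = \bigcup_(N in [set: nat]) closure (j @` A0N n0 N)) /\
  (forall (X Y : A) (N : nat) (u v : nat -> A0),
      X \in A1 -> Y \in A1 -> boundedN n0 N u -> boundedN n0 N v ->
      (j \o u) @ \oo --> X -> (j \o v) @ \oo --> Y ->
      exists Z : A, Z \in A1 /\ (fun k => j (u k * v k)) @ \oo --> Z) /\
  (forall X Y Z Z' : A, is_product n0 j X Y Z -> is_product n0 j X Y Z' ->
      Z = Z') /\
  (forall a b : A0, mul (j a) (j b) = j (a * b)) /\
  (forall X : A, X \in A1 ->
      {within A1, continuous (mul X)} /\
      {within A1, continuous (fun Y => mul Y X)}) /\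
  (0 \in A1) /\
  (forall X Y : A, X \in A1 -> Y \in A1 -> X + Y \in A1) /\
  (forall (c : R[i]) (X : A), X \in A1 -> c *: X \in A1) /\
  (forall X Y : A, X \in A1 -> Y \in A1 -> mul X Y \in A1) /\
  (forall X : A, X \in A1 -> stA X \in A1) /\
  (forall X Y Z : A, X \in A1 -> Y \in A1 -> Z \in A1 ->
      mul (mul X Y) Z = mul X (mul Y Z)) /\
  (forall X Y Z : A, X \in A1 -> Y \in A1 -> Z \in A1 ->
      mul X (Y + Z) = mul X Y + mul X Z /\ mul (X + Y) Z = mul X Z + mul Y Z) /\
  (forall (c : R[i]) (X Y : A), X \in A1 -> Y \in A1 ->
      mul (c *: X) Y = c *: mul X Y /\ mul X (c *: Y) = c *: mul X Y) /\
  (forall X : A, X \in A1 -> stA (stA X) = X) /\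
  (forall X Y : A, X \in A1 -> Y \in A1 -> stA (X + Y) = stA X + stA Y) /\
  (forall (c : R[i]) (X : A), X \in A1 -> stA (c *: X) = c^* *: stA X) /\
  (forall X Y : A, X \in A1 -> Y \in A1 -> stA (mul X Y) = mul (stA Y) (stA X)) /\
  (forall X : A, X \in A1 -> `|stA X| = `|X|).
Proof.
split.
  apply/seteqP; split => a // _.
  have [N hN] := bnd_cst a; exists N => //; exact: (hN 0%N).
split.
  move=> _ [a _ <-]; have [N hN] := bnd_cst a.
  rewrite -in_setE; apply: (mem_A1 hN); exact: cvg_cst.
split.
  apply/seteqP; split => X.
    rewrite -in_setE => /A1_rep [N [u [hu hX]]]; exists N => //.
    apply: (closed_cvg _ (@closed_closure _ (j @` A0N n0 N)) _ X hX).
    apply: filterE => k; apply: subset_closure; by exists (u k).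
  move=> [N _ hcl].
  have hex : forall n : nat, exists a, A0N n0 N a /\ `|X - j a| < n.+1%:R^-1.
    move=> n.
    have hr : 0 < (n.+1%:R^-1 : R[i]) by rewrite invr_gt0 ltr0Sn.
    have [_ [[a ha <-] hb]] := hcl _ (nbhsx_ballx X _ hr).
    by exists a; split => //; move: hb; rewrite -ball_normE.
  have [u hu] := choice hex.
  rewrite -in_setE; apply: (mem_A1 (N := N) (u := u)); first by move=> k; exact: (hu k).1.
  apply/cvgrPdist_lt => e e0.
  have [m hm] : exists m : nat, e^-1 < m%:R by apply: archiC; rewrite invr_gt0.
  exists m => // n /= hn.
  apply: lt_trans (hu n).2 _.
  rewrite -[e]invrK ltf_pV2 ?posrE ?invr_gt0 ?ltr0Sn //.
  by apply: lt_le_trans hm _; rewrite ler_nat leqW.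
split.
  move=> X Y N u v _ _ hu hv hX hY; exists (mul X Y); split.
    exact: (mem_A1 (bnd_mul hu hv) (mul_cvg hu hv hX hY)).
  exact: mul_cvg hu hv hX hY.
split; first exact: prod_uniq.
split.
  move=> a b; have [N1 h1] := bnd_cst a; have [N2 h2] := bnd_cst b.
  apply: (mul_eq (N := maxn N1 N2) (u := fun=> a) (v := fun=> b)).
  - by apply: bnd_mono h1 _; rewrite leq_maxl.
  - by apply: bnd_mono h2 _; rewrite leq_maxr.
  - exact: cvg_cst.
  - exact: cvg_cst.
  - exact: cvg_cst.
split.
  move=> X /A1_rep [N [u [hu hX]]]; split; apply: (within_cont N%:R) => Y Y' hY hY'.
    exact: (mulX_lip hu hX _ _ (mem_set hY) (mem_set hY')).1.
  exact: (mulX_lip hu hX _ _ (mem_set hY) (mem_set hY')).2.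
split.
  rewrite -j0; have [N hN] := bnd_cst 0.
  apply: (mem_A1 hN); exact: cvg_cst.
split.
  move=> X Y hX hY; have [N [u [v [hu hv hXu hYv]]]] := A1_rep2 hX hY.
  exact: (mem_A1 (bnd_add hu hv) (jD_cvg hXu hYv)).
split.
  move=> c X /A1_rep [N [u [hu hX]]]; have [K hK] := bnd_scale c.
  exact: (mem_A1 (hK _ _ hu) (jZ_cvg c hX)).
split.
  move=> X Y hX hY; have [N [u [v [hu hv hXu hYv]]]] := A1_rep2 hX hY.
  exact: (mem_A1 (bnd_mul hu hv) (mul_cvg hu hv hXu hYv)).
split.
  move=> X /A1_rep [N [u [hu hX]]].
  exact: (mem_A1 (bnd_st hu) (stA_cvg hX)).
split.
  move=> X Y Z hX hY hZ.
  have [N1 [u [v [hu hv hXu hYv]]]] := A1_rep2 hX hY.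
  have [N2 [w [hw hZw]]] := A1_rep hZ.
  pose M := (maxn N1 N2).+1.
  have hMM : (M <= M * M)%N by rewrite leq_pmulr.
  have huM : boundedN n0 M u by apply: bnd_mono hu _; apply: leqW; rewrite leq_maxl.
  have hvM : boundedN n0 M v by apply: bnd_mono hv _; apply: leqW; rewrite leq_maxl.
  have hwM : boundedN n0 M w by apply: bnd_mono hw _; apply: leqW; rewrite leq_maxr.
  have H1 := mul_cvg (bnd_mul huM hvM) (bnd_mono hwM hMM) (mul_cvg huM hvM hXu hYv) hZw.
  have H2 := mul_cvg (bnd_mono huM hMM) (bnd_mul hvM hwM) hXu (mul_cvg hvM hwM hYv hZw).
  apply: (lim_uniq H1); apply: (cvg_eqf _ H2) => k /=.
  by rewrite mulrA.
split.
  move=> X Y Z hX hY hZ.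
  have [N1 [u [v [hu hv hXu hYv]]]] := A1_rep2 hX hY.
  have [N2 [w [hw hZw]]] := A1_rep hZ.
  pose M := maxn N1 N2.
  have hMM : (M <= M + M)%N by rewrite leq_addl.
  have huM : boundedN n0 M u by apply: bnd_mono hu _; rewrite leq_maxl.
  have hvM : boundedN n0 M v by apply: bnd_mono hv _; rewrite leq_maxl.
  have hwM : boundedN n0 M w by apply: bnd_mono hw _; rewrite leq_maxr.
  split.
    have H1 := mul_cvg (bnd_mono huM hMM) (bnd_add hvM hwM) hXu (jD_cvg hYv hZw).
    have H2 : (fun k => j (u k * v k) + j (u k * w k)) @ \oo --> mul X Y + mul X Z.
      by apply: cvgD; [exact: (mul_cvg huM hvM hXu hYv)|exact: (mul_cvg huM hwM hXu hZw)].
    apply: (lim_uniq H1); apply: (cvg_eqf _ H2) => k /=.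
    by rewrite mulrDr (cq_j_add HQ).
  have H1 := mul_cvg (bnd_add huM hvM) (bnd_mono hwM hMM) (jD_cvg hXu hYv) hZw.
  have H2 : (fun k => j (u k * w k) + j (v k * w k)) @ \oo --> mul X Z + mul Y Z.
    by apply: cvgD; [exact: (mul_cvg huM hwM hXu hZw)|exact: (mul_cvg hvM hwM hYv hZw)].
  apply: (lim_uniq H1); apply: (cvg_eqf _ H2) => k /=.
  by rewrite mulrDl (cq_j_add HQ).
split.
  move=> c X Y hX hY.
  have [N [u [v [hu hv hXu hYv]]]] := A1_rep2 hX hY.
  have [K hK] := bnd_scale c.
  pose M := maxn (K * N) N.
  have h1 : (K * N <= M)%N by rewrite leq_maxl.
  have h2 : (N <= M)%N by rewrite leq_maxr.
  split.
    have H1 := mul_cvg (bnd_mono (hK _ _ hu) h1) (bnd_mono hv h2) (jZ_cvg c hXu) hYv.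
    have H2 : (fun k => c *: j (u k * v k)) @ \oo --> c *: mul X Y.
      by apply: cvgZl_tmp; exact: (mul_cvg hu hv hXu hYv).
    apply: (lim_uniq H1); apply: (cvg_eqf _ H2) => k /=.
    by rewrite -scalerAl (cq_j_scale HQ).
  have H1 := mul_cvg (bnd_mono hu h2) (bnd_mono (hK _ _ hv) h1) hXu (jZ_cvg c hYv).
  have H2 : (fun k => c *: j (u k * v k)) @ \oo --> c *: mul X Y.
    by apply: cvgZl_tmp; exact: (mul_cvg hu hv hXu hYv).
  apply: (lim_uniq H1); apply: (cvg_eqf _ H2) => k /=.
  by rewrite st_scale_r (cq_j_scale HQ).
split.
  move=> X /A1_rep [N [u [hu hX]]].
  have H1 := stA_cvg (stA_cvg hX).
  apply: (lim_uniq H1); apply: (cvg_eqf _ hX) => k /=.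
  by rewrite !(cs_st_invol HC).
split.
  move=> X Y hX hY; have [N [u [v [hu hv hXu hYv]]]] := A1_rep2 hX hY.
  have H1 := stA_cvg (jD_cvg hXu hYv).
  have H2 : (fun k => j (st (u k)) + j (st (v k))) @ \oo --> stA X + stA Y.
    by apply: cvgD; [exact: (stA_cvg hXu)|exact: (stA_cvg hYv)].
  apply: (lim_uniq H1); apply: (cvg_eqf _ H2) => k /=.
  by rewrite (cs_st_add HC) (cq_j_add HQ).
split.
  move=> c X /A1_rep [N [u [hu hX]]].
  have H1 := stA_cvg (jZ_cvg c hX).
  have H2 : (fun k => c^* *: j (st (u k))) @ \oo --> c^* *: stA X.
    by apply: cvgZl_tmp; exact: (stA_cvg hX).
  apply: (lim_uniq H1); apply: (cvg_eqf _ H2) => k /=.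
  by rewrite (cs_st_scale HC) (cq_j_scale HQ).
split.
  move=> X Y hX hY; have [N [u [v [hu hv hXu hYv]]]] := A1_rep2 hX hY.
  have H1 := stA_cvg (mul_cvg hu hv hXu hYv).
  have H2 := mul_cvg (bnd_st hv) (bnd_st hu) (stA_cvg hYv) (stA_cvg hXu).
  apply: (lim_uniq H1); apply: (cvg_eqf _ H2) => k /=.
  by rewrite (cs_st_mul HC).
move=> X /A1_rep [N [u [hu hX]]].
have H1 : (fun k => (`|j (st (u k))| : R[i]^o)) @ \oo --> (`|stA X| : R[i]^o).
  by apply: cvg_norm; exact: (stA_cvg hX).
have H2 : (fun k => (`|j (u k)| : R[i]^o)) @ \oo --> (`|X| : R[i]^o).
  by apply: cvg_norm; exact: hX.
apply: (@lim_uniq R (R[i]^o) _ _ _ H1); apply: (cvg_eqf _ H2) => k /=.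
by rewrite (cq_n_st HQ).
Qed.

End Prop61.


Theorem proposition6p1 (R : realType) (A0 : lalgType R[i]) (st : A0 -> A0)
  (n0 : A0 -> R) (A : completeNormedModType R[i]) (j : A0 -> A)
  (stA : A -> A) :
  is_unital_Cstar_algebra st n0 ->
  is_CQstar_completion st n0 j stA ->
  let A1 := tau_ind_completion n0 j in
  let mul := A1mul n0 j in
  (* A0 = \bigcup_N A0(N) *)
  (setT = \bigcup_(N in [set: nat]) A0N n0 N) /\
  (* A0 \subset A1 \subset A *)
  (j @` setT `<=` A1) /\
  (* A1 = \bigcup_N closure of A0(N) in A *)
  (A1 = \bigcup_(N in [set: nat]) closure (j @` A0N n0 N)) /\
  (* existence of the product limit, lying in A1 *)
  (forall (X Y : A) (N : nat) (u v : nat -> A0),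
      X \in A1 -> Y \in A1 -> boundedN n0 N u -> boundedN n0 N v ->
      (j \o u) @ \oo --> X -> (j \o v) @ \oo --> Y ->
      exists Z : A, Z \in A1 /\ (fun k => j (u k * v k)) @ \oo --> Z) /\
  (* independence of the chosen sequences *)
  (forall X Y Z Z' : A, is_product n0 j X Y Z -> is_product n0 j X Y Z' ->
      Z = Z') /\
  (* the multiplication extends that of A0 *)
  (forall a b : A0, mul (j a) (j b) = j (a * b)) /\
  (* separate ||.||-continuity *)
  (forall X : A, X \in A1 ->
      {within A1, continuous (mul X)} /\
      {within A1, continuous (fun Y => mul Y X)}) /\
  (* A1 is a *-algebra (subspace of A closed under product and involution) *)
  (0 \in A1) /\
  (forall X Y : A, X \in A1 -> Y \in A1 -> X + Y \in A1) /\
  (forall (c : R[i]) (X : A), X \in A1 -> c *: X \in A1) /\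
  (forall X Y : A, X \in A1 -> Y \in A1 -> mul X Y \in A1) /\
  (forall X : A, X \in A1 -> stA X \in A1) /\
  (forall X Y Z : A, X \in A1 -> Y \in A1 -> Z \in A1 ->
      mul (mul X Y) Z = mul X (mul Y Z)) /\
  (forall X Y Z : A, X \in A1 -> Y \in A1 -> Z \in A1 ->
      mul X (Y + Z) = mul X Y + mul X Z /\ mul (X + Y) Z = mul X Z + mul Y Z) /\
  (forall (c : R[i]) (X Y : A), X \in A1 -> Y \in A1 ->
      mul (c *: X) Y = c *: mul X Y /\ mul X (c *: Y) = c *: mul X Y) /\
  (forall X : A, X \in A1 -> stA (stA X) = X) /\
  (forall X Y : A, X \in A1 -> Y \in A1 -> stA (X + Y) = stA X + stA Y) /\
  (forall (c : R[i]) (X : A), X \in A1 -> stA (c *: X) = c^* *: stA X) /\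
  (forall X Y : A, X \in A1 -> Y \in A1 -> stA (mul X Y) = mul (stA Y) (stA X)) /\
  (* isometric involution *)
  (forall X : A, X \in A1 -> `|stA X| = `|X|).
Proof.
move=> HC HQ A1 mul.
exact: (@main _ _ _ _ _ _ _ HC HQ).
Qed.
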